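(* Let $k\in\{1,2,\dots\}\cup\{\infty\}$ and $a,b>0$ with $a,b\neq1$. Then $D^k(\mathbb{R},0)\cap w_b\,D^k(\mathbb{R},0)\,w_a$ equals $\varnothing$ if $a\neq b$ and $a\neq 1/b$; equals $E^{k,+}(\mathbb{R},0)$ if $ab=1$; and equals $E^{k,-}(\mathbb{R},0)$ if $a=b$.
   Context: $D^k(\mathbb{R},0)$ is the group of $C^k$-diffeomorphisms of $\mathbb{R}$ fixing $0$. $E^k(\mathbb{R},0)$ is its subgroup of $h$ with $h^{(i)}(0)=0$ for all integers $2\le i\le k$ (all $i\ge2$ if $k=\infty$); $E^{k,+}(\mathbb{R},0)$ and $E^{k,-}(\mathbb{R},0)$ denote its orientation preserving and orientation reversing elements. For $c>0$, $w_c\colon\mathbb{R}\to\mathbb{R}$ is the homeomorphism $w_c(x)=x$ for $x\le0$, $w_c(x)=cx$ for $x>0$, and $w_bDw_a=\{w_b\circ f\circ w_a: f\in D^k(\mathbb{R},0)\}$. *)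

(* Defs.v *)
From Stdlib Require Import Reals.
From Coquelicot Require Import Coquelicot.
Open Scope R_scope.

(* Smoothness class k in {1,2,...} ∪ {∞}: Fin n (n >= 1 required separately) or Inf. *)
Inductive smoothness := Fin (n : nat) | Inf.

Definition valid_smoothness (k : smoothness) : Prop :=
  match k with Fin n => (1 <= n)%nat | Inf => True end.

Definition le_k (i : nat) (k : smoothness) : Prop :=
  match k with Fin n => (i <= n)%nat | Inf => True end.

Definition Ck (k : smoothness) (f : R -> R) : Prop :=
  forall i : nat, le_k i k ->
    (forall x, ex_derive_n f i x) /\ (forall x, continuous (Derive_n f i) x).

Definition Ck_diffeo (k : smoothness) (h : R -> R) : Prop :=
  Ck k h /\ exists g : R -> R,
    (forall x, g (h x) = x) /\ (forall y, h (g y) = y) /\ Ck k g.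

Definition Dk (k : smoothness) (h : R -> R) : Prop :=
  Ck_diffeo k h /\ h 0 = 0.

Definition Ek (k : smoothness) (h : R -> R) : Prop :=
  Dk k h /\ forall i : nat, (2 <= i)%nat -> le_k i k -> Derive_n h i 0 = 0.

Definition orientation_preserving (h : R -> R) : Prop :=
  forall x y, x < y -> h x < h y.
Definition orientation_reversing (h : R -> R) : Prop :=
  forall x y, x < y -> h y < h x.

Definition Ek_plus (k : smoothness) (h : R -> R) : Prop :=
  Ek k h /\ orientation_preserving h.
Definition Ek_minus (k : smoothness) (h : R -> R) : Prop :=
  Ek k h /\ orientation_reversing h.

Definition w (c : R) (x : R) : R := if Rle_dec x 0 then x else c * x.

Definition in_wDw (k : smoothness) (b a : R) (h : R -> R) : Prop :=
  exists f : R -> R, Dk k f /\ h = (fun x => w b (f (w a x))).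

(* Main.v *)
Require Import Defs.
From Stdlib Require Import Reals Lra Lia FunctionalExtensionality.
From Coquelicot Require Import Coquelicot.
Open Scope R_scope.

Lemma mk_locally (x : R) (P : R -> Prop) :
  (exists d, 0 < d /\ forall y, Rabs (y - x) < d -> P y) -> locally x P.
Proof.
  intros [d [Hd H]]. exists (mkposreal d Hd). intros y Hy. apply H.
  exact Hy.
Qed.

Lemma cont_eps (f : R -> R) x : continuous f x ->
  forall e, 0 < e -> exists d, 0 < d /\ forall y, Rabs (y - x) < d -> Rabs (f y - f x) < e.
Proof.
  intros Hc e He. apply continuity_pt_filterlim in Hc.
  destruct (Hc e He) as [d [Hd H]].
  exists d; split; auto. intros y Hy.
  destruct (Req_dec y x) as [->|Hne].
  - rewrite Rminus_eq_0, Rabs_R0; auto.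
  - apply H. split. split. exact I. auto. exact Hy.
Qed.

Lemma eps_cont (f : R -> R) x :
  (forall e, 0 < e -> exists d, 0 < d /\ forall y, Rabs (y - x) < d -> Rabs (f y - f x) < e) ->
  continuous f x.
Proof.
  intros H. apply continuity_pt_filterlim. intros e He.
  destruct (H e He) as [d [Hd H']]. exists d; split; auto.
  intros y [_ Hy]. apply H'. exact Hy.
Qed.

Definition glue (u v : R -> R) (x : R) : R := if Rle_dec x 0 then u x else v x.

Lemma glue_l u v x : x <= 0 -> glue u v x = u x.
Proof. intros H. unfold glue. destruct (Rle_dec x 0); [reflexivity| lra]. Qed.
Lemma glue_r u v x : 0 < x -> glue u v x = v x.
Proof. intros H. unfold glue. destruct (Rle_dec x 0); [lra| reflexivity]. Qed.

Lemma glue_cont u v x : (forall y, continuous u y) -> (forall y, continuous v y) ->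
  u 0 = v 0 -> continuous (glue u v) x.
Proof.
  intros Hu Hv H0. apply eps_cont. intros e He.
  destruct (Rlt_le_dec x 0) as [Hx|Hx].
  - destruct (cont_eps u x (Hu x) e He) as [d [Hd Hd']].
    exists (Rmin d (-x)). split. apply Rmin_pos; lra.
    intros y Hy. assert (Hy1 := Rlt_le_trans _ _ _ Hy (Rmin_l _ _)).
    assert (Hy2 := Rlt_le_trans _ _ _ Hy (Rmin_r _ _)).
    apply Rabs_def2 in Hy2.
    rewrite !glue_l by lra. apply Hd'; auto.
  - destruct (Rle_lt_or_eq_dec _ _ Hx) as [Hx'|Hx'].
    + destruct (cont_eps v x (Hv x) e He) as [d [Hd Hd']].
      exists (Rmin d x). split. apply Rmin_pos; lra.
      intros y Hy. assert (Hy1 := Rlt_le_trans _ _ _ Hy (Rmin_l _ _)).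
      assert (Hy2 := Rlt_le_trans _ _ _ Hy (Rmin_r _ _)).
      apply Rabs_def2 in Hy2.
      rewrite !glue_r by lra. apply Hd'; auto.
    + subst x.
      destruct (cont_eps u 0 (Hu 0) e He) as [d1 [Hd1 Hd1']].
      destruct (cont_eps v 0 (Hv 0) e He) as [d2 [Hd2 Hd2']].
      exists (Rmin d1 d2). split. apply Rmin_pos; lra.
      intros y Hy. assert (Hy1 := Rlt_le_trans _ _ _ Hy (Rmin_l _ _)).
      assert (Hy2 := Rlt_le_trans _ _ _ Hy (Rmin_r _ _)).
      rewrite (glue_l u v 0) by lra.
      destruct (Rle_dec y 0).
      * rewrite glue_l by lra. apply Hd1'; auto.
      * rewrite glue_r by lra. rewrite H0. apply Hd2'; auto.
Qed.

Lemma glue_derive0 u v L : derivable_pt_lim u 0 L -> derivable_pt_lim v 0 L ->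
  u 0 = v 0 -> derivable_pt_lim (glue u v) 0 L.
Proof.
  intros Hu Hv H0 e He.
  destruct (Hu e He) as [d1 Hd1]. destruct (Hv e He) as [d2 Hd2].
  assert (Hp : 0 < Rmin d1 d2) by (apply Rmin_pos; apply cond_pos).
  exists (mkposreal _ Hp). intros h Hh Hh'. simpl in Hh'.
  assert (Hy1 := Rlt_le_trans _ _ _ Hh' (Rmin_l _ _)).
  assert (Hy2 := Rlt_le_trans _ _ _ Hh' (Rmin_r _ _)).
  rewrite (glue_l u v 0) by lra.
  destruct (Rle_dec (0 + h) 0).
  - rewrite glue_l by lra. apply Hd1; auto.
  - rewrite glue_r by lra. rewrite H0. apply Hd2; auto.
Qed.

Lemma glue_loc_l u v x : x < 0 -> locally x (fun t => u t = glue u v t).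
Proof.
  intros Hx. apply mk_locally. exists (-x). split. lra.
  intros y Hy. apply Rabs_def2 in Hy. rewrite glue_l by lra. reflexivity.
Qed.
Lemma glue_loc_r u v x : 0 < x -> locally x (fun t => v t = glue u v t).
Proof.
  intros Hx. apply mk_locally. exists x. split. lra.
  intros y Hy. apply Rabs_def2 in Hy. rewrite glue_r by lra. reflexivity.
Qed.

Lemma le_k_S i k : le_k (S i) k -> le_k i k.
Proof. destruct k; simpl; auto; lia. Qed.
Lemma le_k_le m i k : (m <= i)%nat -> le_k i k -> le_k m k.
Proof. destruct k; simpl; auto; lia. Qed.

Lemma glue_Ck k u v : Ck k u -> Ck k v ->
  (forall i, le_k i k -> Derive_n u i 0 = Derive_n v i 0) -> Ck k (glue u v).
Proof.
  intros Hu Hv Heq.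
  assert (Cl : forall i, le_k i k -> forall x, ex_derive_n (glue u v) i x /\
     Derive_n (glue u v) i x = glue (Derive_n u i) (Derive_n v i) x).
  { induction i as [|i IH]; intros Hi x.
    - split. exact I. reflexivity.
    - assert (Hi' := le_k_S _ _ Hi). specialize (IH Hi').
      assert (HG : forall y, is_derive (glue (Derive_n u i) (Derive_n v i)) y
                 (glue (Derive_n u (S i)) (Derive_n v (S i)) y)).
      { intros y. destruct (Rlt_le_dec y 0) as [Hy|Hy].
        - rewrite glue_l by lra. eapply is_derive_ext_loc.
          apply glue_loc_l; exact Hy.
          apply Derive_correct. apply (proj1 (Hu (S i) Hi)).
        - destruct (Rle_lt_or_eq_dec _ _ Hy) as [Hy'|Hy'].
          + rewrite glue_r by lra. eapply is_derive_ext_loc.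
            apply glue_loc_r; exact Hy'.
            apply Derive_correct. apply (proj1 (Hv (S i) Hi)).
          + subst y. rewrite glue_l by lra. apply is_derive_Reals.
            apply glue_derive0.
            * apply is_derive_Reals. apply Derive_correct. apply (proj1 (Hu (S i) Hi)).
            * rewrite (Heq (S i) Hi). apply is_derive_Reals. apply Derive_correct.
              apply (proj1 (Hv (S i) Hi)).
            * apply Heq; auto. }
      split.
      + simpl. eapply ex_derive_ext.
        intros t. symmetry. apply (proj2 (IH t)).
        eexists. apply HG.
      + simpl. rewrite (Derive_ext _ (glue (Derive_n u i) (Derive_n v i))).
        apply is_derive_unique. apply HG.
        intros t. apply (proj2 (IH t)). }
  intros i Hi. split.
  - intros x. apply (proj1 (Cl i Hi x)).
  - intros x. eapply continuous_ext.
    intros t. symmetry. apply (proj2 (Cl i Hi t)).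
    apply glue_cont.
    + intros y. apply (proj2 (Hu i Hi)).
    + intros y. apply (proj2 (Hv i Hi)).
    + apply Heq; auto.
Qed.

Lemma Ck_ex k f i x : Ck k f -> le_k i k -> ex_derive_n f i x.
Proof. intros H Hi. apply (proj1 (H i Hi)). Qed.
Lemma Ck_cont k f i x : Ck k f -> le_k i k -> continuous (Derive_n f i) x.
Proof. intros H Hi. apply (proj2 (H i Hi)). Qed.

Lemma scale_Dn k f c d i x : Ck k f -> le_k i k ->
  Derive_n (fun y => c * f (d * y)) i x = c * (d ^ i * Derive_n f i (d * x)).
Proof.
  intros Hf Hi. rewrite (Derive_n_scal_l (fun y => f (d * y))).
  rewrite Derive_n_comp_scal. reflexivity.
  apply filter_forall. intros t m Hm. apply (Ck_ex k). auto. eapply le_k_le; eauto.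
Qed.

Lemma cont_scale (g : R -> R) c d x : (forall y, continuous g y) ->
  continuous (fun y => c * g (d * y)) x.
Proof.
  intros Hg.
  apply (continuous_mult (fun _ => c) (fun y => g (d * y))).
  apply continuous_const.
  apply (continuous_comp (fun y => d * y) g).
  apply (continuous_mult (fun _ => d) (fun y => y)).
  apply continuous_const. apply continuous_id.
  apply Hg.
Qed.

Lemma scale_Ck k f c d : Ck k f -> Ck k (fun y => c * f (d * y)).
Proof.
  intros Hf i Hi. split.
  - intros x. apply ex_derive_n_scal_l. apply (ex_derive_n_comp_scal f).
    apply filter_forall. intros t m Hm. apply (Ck_ex k). auto. eapply le_k_le; eauto.
  - intros x. eapply continuous_ext.
    intros t. symmetry. apply (scale_Dn k); auto.
    apply (cont_scale (fun y => d ^ i * Derive_n f i y)).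
    intros y. apply (continuous_mult (fun _ => d ^ i) (Derive_n f i)).
    apply continuous_const. apply (Ck_cont k); auto.
Qed.

Lemma valid_1 k : valid_smoothness k -> le_k 1 k.
Proof. destruct k; simpl; auto. Qed.

Lemma inv_deriv k f g x : valid_smoothness k -> Ck k f -> Ck k g ->
  (forall x, g (f x) = x) -> Derive g (f x) * Derive f x = 1.
Proof.
  intros Hk Hf Hg Hgf.
  assert (H1 := valid_1 k Hk).
  assert (Hd := is_derive_comp g f x (Derive g (f x)) (Derive f x)
     (Derive_correct _ _ (Ck_ex k g 1 (f x) Hg H1))
     (Derive_correct _ _ (Ck_ex k f 1 x Hf H1))).
  apply is_derive_unique in Hd.
  rewrite (Derive_ext _ (fun x => x)) in Hd by auto.
  rewrite Derive_id in Hd. rewrite Hd. simpl. unfold scal; simpl. unfold mult; simpl. ring.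
Qed.

Lemma straddle A B : A * B <= 0 -> Rmin A B <= 0 <= Rmax A B.
Proof.
  intros H. destruct (Rle_lt_dec A 0); destruct (Rle_lt_dec B 0).
  - split. apply Rle_trans with A; auto. apply Rmin_l.
    destruct (Req_dec A 0). subst; apply Rle_trans with 0; [lra| apply Rmax_l].
    destruct (Req_dec B 0). subst; apply Rle_trans with 0; [lra| apply Rmax_r].
    nra.
  - split. apply Rle_trans with A; auto. apply Rmin_l. apply Rle_trans with B; [lra|apply Rmax_r].
  - split. apply Rle_trans with B; auto. apply Rmin_r. apply Rle_trans with A; [lra|apply Rmax_l].
  - nra.
Qed.

Lemma mono k f : valid_smoothness k -> Ck k f -> (forall x, Derive f x <> 0) ->
  (Derive f 0 > 0 /\ orientation_preserving f) \/ (Derive f 0 < 0 /\ orientation_reversing f).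
Proof.
  intros Hk Hf Hne. assert (H1 := valid_1 k Hk).
  assert (Hc : forall x, continuous (Derive f) x) by (intros; apply (Ck_cont k f 1); auto).
  assert (Hsame : forall x, Derive f x * Derive f 0 > 0).
  { intros x. destruct (Rlt_le_dec 0 (Derive f x * Derive f 0)) as [H|H]; auto.
    exfalso. destruct (IVT_gen_consistent (Derive f) x 0 0 Hc) as [z [_ Hz]].
    - apply straddle; auto.
    - exact (Hne z Hz). }
  destruct (Rlt_le_dec 0 (Derive f 0)) as [Hp|Hp].
  - left. split; auto. intros x y Hxy.
    apply (incr_function f m_infty p_infty (Derive f)); simpl; auto.
    intros t _ _. apply Derive_correct. apply (Ck_ex k f 1); auto.
    intros t _ _. assert (H := Hsame t). nra.
  - right. assert (Hn : Derive f 0 < 0) by (assert (H := Hne 0); lra).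
    split; auto. intros x y Hxy.
    cut (- f x < - f y). lra.
    apply (incr_function (fun t => - f t) m_infty p_infty (fun t => - Derive f t)); simpl; auto.
    intros t _ _. apply (is_derive_opp f). apply Derive_correct. apply (Ck_ex k f 1); auto.
    intros t _ _. assert (H := Hsame t). nra.
Qed.

Lemma agree_pt (P Q : R -> R) : continuous P 0 -> continuous Q 0 ->
  (forall d, 0 < d -> exists x, Rabs x < d /\ P x = Q x) -> P 0 = Q 0.
Proof.
  intros HP HQ H. destruct (Req_dec (P 0) (Q 0)) as [E|E]; auto. exfalso.
  assert (He : 0 < Rabs (P 0 - Q 0) / 2).
  { apply Rdiv_lt_0_compat; [apply Rabs_pos_lt; lra | lra]. }
  destruct (cont_eps P 0 HP _ He) as [d1 [Hd1 H1]].
  destruct (cont_eps Q 0 HQ _ He) as [d2 [Hd2 H2]].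
  destruct (H (Rmin d1 d2)) as [x [Hx Hpq]]. apply Rmin_pos; auto.
  assert (Hx1 := Rlt_le_trans _ _ _ Hx (Rmin_l _ _)).
  assert (Hx2 := Rlt_le_trans _ _ _ Hx (Rmin_r _ _)).
  specialize (H1 x). specialize (H2 x). rewrite Rminus_0_r in H1, H2.
  specialize (H1 Hx1). specialize (H2 Hx2). rewrite Hpq in H1.
  assert (Rabs (P 0 - Q 0) <= Rabs (Q x - P 0) + Rabs (Q x - Q 0)).
  { replace (P 0 - Q 0) with (-(Q x - P 0) + (Q x - Q 0)) by ring.
    eapply Rle_trans. apply Rabs_triang. rewrite Rabs_Ropp. lra. }
  lra.
Qed.

Lemma glue_Dn0 k F u v i : Ck k F -> Ck k u -> Ck k v ->
  (forall x, F x = glue u v x) -> le_k i k ->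
  Derive_n F i 0 = Derive_n u i 0 /\ Derive_n F i 0 = Derive_n v i 0.
Proof.
  intros HF Hu Hv HE Hi. split; apply agree_pt; try apply (Ck_cont k); auto;
    intros d Hd.
  - exists (- d / 2). split. rewrite Rabs_left by lra. lra.
    apply Derive_n_ext_loc. apply mk_locally. exists (d/2). split. lra.
    intros y Hy. apply Rabs_def2 in Hy. rewrite HE, glue_l by lra. reflexivity.
  - exists (d / 2). split. rewrite Rabs_right by lra. lra.
    apply Derive_n_ext_loc. apply mk_locally. exists (d/2). split. lra.
    intros y Hy. apply Rabs_def2 in Hy. rewrite HE, glue_r by lra. reflexivity.
Qed.

Lemma w_l c x : x <= 0 -> w c x = x.
Proof. intros H. unfold w. destruct (Rle_dec x 0); [reflexivity | contradiction]. Qed.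
Lemma w_r c x : 0 < x -> w c x = c * x.
Proof. intros H. unfold w. destruct (Rle_dec x 0); [lra | reflexivity]. Qed.
Lemma w_incr c x y : 0 < c -> x < y -> w c x < w c y.
Proof.
  intros Hc H. destruct (Rle_lt_dec x 0); destruct (Rle_lt_dec y 0).
  - rewrite !w_l; lra.
  - rewrite w_l, w_r by lra. nra.
  - lra.
  - rewrite !w_r by lra. nra.
Qed.
Lemma w_inv c x : 0 < c -> w (/ c) (w c x) = x.
Proof.
  intros Hc. destruct (Rle_lt_dec x 0).
  - rewrite (w_l c x) by auto. rewrite w_l; auto.
  - rewrite (w_r c x) by lra. rewrite w_r. field; lra. apply Rmult_lt_0_compat; lra.
Qed.

Lemma rep_incr f c d : f 0 = 0 -> orientation_preserving f -> 0 < c -> 0 < d ->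
  forall x, w c (f (w d x)) = glue f (fun y => c * f (d * y)) x.
Proof.
  intros H0 Hf Hc Hd x. destruct (Rle_lt_dec x 0).
  - rewrite (glue_l _ _ x r), (w_l d x r). apply w_l.
    destruct (Req_dec x 0) as [E|E]. subst; lra. assert (H1 := Hf x 0). lra.
  - rewrite (glue_r _ _ x r), (w_r d x r). apply w_r.
    rewrite <- H0. apply Hf. nra.
Qed.

Lemma rep_decr f c d : f 0 = 0 -> orientation_reversing f -> 0 < c -> 0 < d ->
  forall x, w c (f (w d x)) = glue (fun y => c * f (1 * y)) (fun y => 1 * f (d * y)) x.
Proof.
  intros H0 Hf Hc Hd x. destruct (Rle_lt_dec x 0).
  - rewrite (glue_l _ _ x r), (w_l d x r). rewrite Rmult_1_l.
    destruct (Req_dec x 0) as [E|E]. subst. rewrite H0, w_l; lra.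
    rewrite w_r; auto. rewrite <- H0. apply Hf. lra.
  - rewrite (glue_r _ _ x r), (w_r d x r). rewrite Rmult_1_l. apply w_l.
    rewrite <- H0. left. apply Hf. nra.
Qed.

Lemma pow_ne1 a n : 0 < a -> a <> 1 -> a ^ S n <> 1.
Proof.
  intros Ha Ha1. destruct (Rlt_le_dec a 1).
  - assert (H := pow_lt_1_compat a (S n) (conj (Rlt_le _ _ Ha) r) (Nat.lt_0_succ n)). lra.
  - assert (H := Rlt_pow_R1 a (S n) (ltac:(lra)) (Nat.lt_0_succ n)). lra.
Qed.

Definition flat k (h : R -> R) := forall i, (2 <= i)%nat -> le_k i k -> Derive_n h i 0 = 0.

Lemma Dk_deriv_ne k f : valid_smoothness k -> Dk k f -> forall x, Derive f x <> 0.
Proof.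
  intros Hk [[Cf [g [Hgf [Hfg Cg]]]] f0] x E.
  assert (H := inv_deriv k f g x Hk Cf Cg Hgf). rewrite E in H. lra.
Qed.

Lemma forward k a b h f : valid_smoothness k -> 0 < a -> 0 < b -> a <> 1 ->
  Dk k h -> Dk k f -> h = (fun x => w b (f (w a x))) ->
  (a * b = 1 /\ orientation_preserving h /\ flat k h) \/
  (a = b /\ orientation_reversing h /\ flat k h).
Proof.
  intros Hk Ha Hb Ha1 Hh Hf Eh.
  assert (Hne := Dk_deriv_ne k f Hk Hf).
  assert (Ch : Ck k h) by apply (proj1 (proj1 Hh)).
  assert (Cf : Ck k f) by apply (proj1 (proj1 Hf)).
  assert (f0 : f 0 = 0) by apply (proj2 Hf).
  assert (H1 := valid_1 k Hk).
  destruct (mono k f Hk Cf Hne) as [[Hp Hfo]|[Hn Hfo]].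
  - assert (Hrep : forall x, h x = glue f (fun y => b * f (a * y)) x).
    { intros x. rewrite Eh. apply rep_incr; auto. }
    assert (G := fun i => glue_Dn0 k h f (fun y => b * f (a * y)) i Ch Cf (scale_Ck k f b a Cf) Hrep).
    assert (Gi : forall i, le_k i k -> Derive_n f i 0 = b * (a ^ i * Derive_n f i 0)).
    { intros i Hi. destruct (G i Hi) as [E1 E2]. transitivity (Derive_n h i 0).
      symmetry; auto. rewrite E2.
      rewrite (scale_Dn k) by auto. rewrite Rmult_0_r. reflexivity. }
    assert (Hab : a * b = 1).
    { assert (E := Gi 1%nat H1). simpl in E. change (Derive (fun x => f x) 0) with (Derive f 0) in E.
      apply Rmult_eq_reg_l with (Derive f 0). rewrite Rmult_1_r. rewrite E at 2. ring. lra. }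
    left. split; auto. split.
    + intros x y Hxy. rewrite Eh. apply w_incr; auto. apply Hfo. apply w_incr; auto.
    + intros i Hi2 Hi. destruct (G i Hi) as [E1 _]. rewrite E1.
      destruct i as [|[|m]]; try lia.
      assert (E := Gi _ Hi). assert (Hp1 := pow_ne1 a m Ha Ha1).
      replace (b * (a ^ S (S m) * Derive_n f (S (S m)) 0)) with
        ((a * b) * a ^ S m * Derive_n f (S (S m)) 0) in E by (simpl; ring).
      rewrite Hab in E.
      apply Rmult_eq_reg_l with (a ^ S m - 1). rewrite Rmult_0_r. lra. lra.
  - assert (Hrep : forall x, h x = glue (fun y => b * f (1 * y)) (fun y => 1 * f (a * y)) x).
    { intros x. rewrite Eh. apply rep_decr; auto. }
    assert (G := fun i => glue_Dn0 k h _ _ i Ch (scale_Ck k f b 1 Cf) (scale_Ck k f 1 a Cf) Hrep).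
    assert (Gi : forall i, le_k i k -> Derive_n h i 0 = b * Derive_n f i 0 /\
                 b * Derive_n f i 0 = a ^ i * Derive_n f i 0).
    { intros i Hi. destruct (G i Hi) as [E1 E2].
      assert (A1 := scale_Dn k f b 1 i 0 Cf Hi). assert (A2 := scale_Dn k f 1 a i 0 Cf Hi).
      replace (1*0) with 0 in A1 by ring. replace (a*0) with 0 in A2 by ring. rewrite pow1 in A1.
      split. rewrite E1, A1; ring. transitivity (Derive_n h i 0). rewrite E1, A1; ring.
      rewrite E2, A2; ring. }
    assert (Hab : a = b).
    { destruct (Gi 1%nat H1) as [_ E]. simpl in E. change (Derive (fun x => f x) 0) with (Derive f 0) in E.
      apply Rmult_eq_reg_r with (Derive f 0). rewrite E. ring. lra. }
    right. split; auto. split.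
    + intros x y Hxy. rewrite Eh. apply w_incr; auto. apply Hfo. apply w_incr; auto.
    + intros i Hi2 Hi. destruct (Gi i Hi) as [E1 E2]. rewrite E1.
      destruct i as [|[|m]]; try lia.
      assert (Hp1 := pow_ne1 a m Ha Ha1). subst b.
      replace (a ^ S (S m)) with (a * a ^ S m) in E2 by (simpl; ring).
      assert (Derive_n f (S (S m)) 0 = 0).
      { apply Rmult_eq_reg_l with (a * (a ^ S m - 1)). rewrite Rmult_0_r. lra.
        apply Rmult_integral_contrapositive; split; lra. }
      rewrite H. ring.
Qed.

Lemma sum_two (F : nat -> R) n : (forall m, (2 <= m <= S n)%nat -> F m = 0) ->
  sum_f_R0 F (S n) = F 0%nat + F 1%nat.
Proof.
  induction n as [|n IH]; intros H.
  - reflexivity.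
  - change (sum_f_R0 F (S (S n))) with (sum_f_R0 F (S n) + F (S (S n))).
    rewrite IH. rewrite (H (S (S n))). ring. lia. intros m Hm. apply H. lia.
Qed.

Lemma TLpos f n x : 0 < x ->
  (forall m t, (m <= S (S n))%nat -> ex_derive_n f m t) ->
  (forall m, (2 <= m <= S n)%nat -> Derive_n f m 0 = 0) ->
  exists z, 0 < z < x /\
    f x - f 0 - x * Derive_n f 1 0 =
    x ^ S (S n) / INR (Factorial.fact (S (S n))) * Derive_n f (S (S n)) z.
Proof.
  intros Hx Hex H0.
  destruct (Taylor_Lagrange f (S n) 0 x Hx) as [z [Hz E]].
  { intros t _ m Hm. apply Hex. auto. }
  exists z. split; auto. rewrite E. rewrite sum_two.
  - cbv beta. rewrite !Rminus_0_r. change (INR (Factorial.fact 0)) with 1.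
    change (INR (Factorial.fact 1)) with 1. rewrite pow_O, pow_1.
    change (Derive_n f 0 0) with (f 0). field. apply INR_fact_neq_0.
  - intros m Hm. rewrite H0 by auto. ring.
Qed.

Lemma abs_form y F D : 0 < F -> Rabs (y / F * D) = Rabs y / F * Rabs D.
Proof.
  intros HF. unfold Rdiv. rewrite !Rabs_mult. rewrite (Rabs_pos_eq (/ F)). reflexivity.
  left. apply Rinv_0_lt_compat. auto.
Qed.

Lemma TLabs f n x : x <> 0 ->
  (forall m t, (m <= S (S n))%nat -> ex_derive_n f m t) ->
  (forall m, (2 <= m <= S n)%nat -> Derive_n f m 0 = 0) ->
  exists z, Rabs z < Rabs x /\
    Rabs (f x - f 0 - x * Derive_n f 1 0) =
    Rabs x ^ S (S n) / INR (Factorial.fact (S (S n))) * Rabs (Derive_n f (S (S n)) z).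
Proof.
  intros Hx Hex H0. assert (HF := INR_fact_lt_0 (S (S n))).
  destruct (Rlt_le_dec 0 x) as [Hp|Hn].
  - destruct (TLpos f n x Hp Hex H0) as [z [Hz E]]. exists z. split.
    rewrite !Rabs_right by lra. lra.
    rewrite E, abs_form, RPow_abs by auto. reflexivity.
  - assert (Hn' : 0 < - x) by lra.
    set (g := fun t => f ((-1) * t)).
    assert (Dg : forall m t, (m <= S (S n))%nat -> Derive_n g m t = (-1) ^ m * Derive_n f m ((-1) * t)).
    { intros m t Hm. unfold g. apply Derive_n_comp_scal.
      apply filter_forall. intros u j Hj. apply Hex. lia. }
    destruct (TLpos g n (- x) Hn') as [z [Hz E]].
    + intros m t Hm. unfold g. apply ex_derive_n_comp_scal.
      apply filter_forall. intros u j Hj. apply Hex. lia.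
    + intros m Hm. rewrite Dg by lia. rewrite Rmult_0_r, H0 by auto. ring.
    + rewrite !Dg in E by lia. unfold g in E.
      replace (-1 * - x) with x in E by ring. rewrite Rmult_0_r in E.
      exists (-1 * z). split.
      rewrite !Rabs_left by lra. lra.
      replace (f x - f 0 - x * Derive_n f 1 0) with
        (x ^ S (S n) / INR (Factorial.fact (S (S n))) * Derive_n f (S (S n)) (-1 * z)).
      rewrite abs_form, RPow_abs by auto. reflexivity.
      symmetry. transitivity (f x - f 0 - - x * ((-1) ^ 1 * Derive_n f 1 0)). simpl; ring.
      rewrite E. replace (x ^ S (S n)) with ((-x) ^ S (S n) * (-1) ^ S (S n)).
      field. apply INR_fact_neq_0.
      rewrite <- Rpow_mult_distr. f_equal. ring.
Qed.

Lemma fact_ge1 n : 1 <= INR (Factorial.fact n).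
Proof. apply (le_INR 1). apply Factorial.lt_O_fact. Qed.

Lemma B1 f n :
  (forall m t, (m <= S (S n))%nat -> ex_derive_n f m t) ->
  (forall m, (2 <= m <= S (S n))%nat -> Derive_n f m 0 = 0) ->
  continuous (Derive_n f (S (S n))) 0 ->
  forall e, 0 < e -> exists d, 0 < d /\ forall x, Rabs x < d ->
    Rabs (f x - f 0 - x * Derive_n f 1 0) <= e * Rabs x ^ S (S n).
Proof.
  intros Hex H0 Hc e He.
  destruct (cont_eps _ 0 Hc e He) as [d [Hd Hd']].
  exists d. split; auto. intros x Hx.
  destruct (Req_dec x 0) as [->|Hx0].
  - rewrite Rabs_R0, pow_i by lia. replace (f 0 - f 0 - 0 * Derive_n f 1 0) with 0 by ring.
    rewrite Rabs_R0. lra.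
  - destruct (TLabs f n x Hx0 Hex) as [z [Hz E]].
    { intros m Hm. apply H0. lia. }
    rewrite E. assert (Hzd : Rabs (Derive_n f (S (S n)) z) < e).
    { specialize (Hd' z). rewrite Rminus_0_r, H0, Rminus_0_r in Hd' by lia. apply Hd'. lra. }
    assert (HF := fact_ge1 (S (S n))).
    assert (HX : 0 <= Rabs x ^ S (S n)) by (apply pow_le; apply Rabs_pos).
    assert (HQ : Rabs x ^ S (S n) / INR (Factorial.fact (S (S n))) <= Rabs x ^ S (S n)).
    { unfold Rdiv. rewrite <- (Rmult_1_r (Rabs x ^ S (S n))) at 2.
      apply Rmult_le_compat_l; auto. rewrite <- Rinv_1. apply Rinv_le_contravar; lra. }
    assert (0 <= Rabs x ^ S (S n) / INR (Factorial.fact (S (S n)))).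
    { apply Rdiv_le_0_compat; lra. }
    assert (HD := Rabs_pos (Derive_n f (S (S n)) z)).
    rewrite (Rmult_comm e). apply Rle_trans with (Rabs x ^ S (S n) * Rabs (Derive_n f (S (S n)) z)).
    apply Rmult_le_compat_r; auto. apply Rmult_le_compat_l; lra.
Qed.

Lemma core k f g n : valid_smoothness k -> Ck k f -> Ck k g ->
  (forall x, g (f x) = x) -> (forall y, f (g y) = y) -> f 0 = 0 -> flat k f ->
  le_k (S (S n)) k -> (forall m, (2 <= m <= S n)%nat -> Derive_n g m 0 = 0) ->
  Derive_n g (S (S n)) 0 = 0.
Proof.
  intros Hk Cf Cg Hgf Hfg f0 Ff Hj Hlow.
  assert (g0 : g 0 = 0) by (rewrite <- f0 at 1; apply Hgf).
  assert (Hinv := inv_deriv k f g 0 Hk Cf Cg Hgf). rewrite f0 in Hinv.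
  set (c := Derive f 0) in *. set (c' := Derive g 0) in *.
  assert (Hc : c <> 0) by (intro E; rewrite E in Hinv; lra).
  assert (Hac : 0 < Rabs c) by (apply Rabs_pos_lt; auto).
  assert (Exf : forall m t, (m <= S (S n))%nat -> ex_derive_n f m t).
  { intros m t Hm. apply (Ck_ex k); auto. eapply le_k_le; eauto. }
  assert (Exg : forall m t, (m <= S (S n))%nat -> ex_derive_n g m t).
  { intros m t Hm. apply (Ck_ex k); auto. eapply le_k_le; eauto. }
  assert (Flf : forall m, (2 <= m <= S (S n))%nat -> Derive_n f m 0 = 0).
  { intros m Hm. apply Ff. lia. eapply le_k_le; [|eauto]. lia. }
  assert (Contf := Ck_cont k f (S (S n)) 0 Cf Hj).
  set (D := Derive_n g (S (S n)) 0).
  destruct (Req_dec D 0) as [E|HD0]; auto. exfalso.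
  assert (HD : 0 < Rabs D) by (apply Rabs_pos_lt; auto).
  destruct (cont_eps _ 0 (Ck_cont k g (S (S n)) 0 Cg Hj) (Rabs D / 2)) as [d1 [Hd1 H1]]. lra.
  set (F := INR (Factorial.fact (S (S n)))).
  assert (HF : 1 <= F) by apply fact_ge1.
  set (K := (2 / Rabs c) ^ S (S n)).
  assert (HK : 0 < K) by (apply pow_lt; apply Rdiv_lt_0_compat; lra).
  set (e0 := Rabs D * Rabs c / (2 * F * K)).
  assert (He0 : 0 < e0).
  { apply Rdiv_lt_0_compat. apply Rmult_lt_0_compat; auto.
    apply Rmult_lt_0_compat; lra. }
  destruct (B1 f n Exf Flf Contf e0 He0) as [d2 [Hd2 H2]].
  destruct (B1 f n Exf Flf Contf (Rabs c / 2)) as [d2' [Hd2' H2']]. lra.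
  set (m3 := Rmin d2 (Rmin d2' 1)).
  assert (Hm3 : 0 < m3) by (apply Rmin_pos; auto; apply Rmin_pos; lra).
  destruct (cont_eps _ 0 (Ck_cont k g 0 0 Cg (le_k_le 0 1 k (le_0_n 1) (valid_1 k Hk))) m3 Hm3)
    as [d3 [Hd3 H3]].
  set (y := Rmin d1 d3 / 2).
  assert (Hmy : 0 < Rmin d1 d3) by (apply Rmin_pos; auto).
  assert (Hy : 0 < y) by (unfold y; lra).
  assert (Hy1 : y < d1) by (unfold y; assert (H := Rmin_l d1 d3); lra).
  assert (Hy3 : y < d3) by (unfold y; assert (H := Rmin_r d1 d3); lra).
  set (x := g y).
  assert (Hfx : f x = y) by apply Hfg.
  assert (Hx : Rabs x < m3).
  { specialize (H3 y). simpl in H3. rewrite g0, !Rminus_0_r in H3. apply H3.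
    rewrite Rabs_right; lra. }
  assert (Hxd2 : Rabs x < d2) by (assert (H := Rmin_l d2 (Rmin d2' 1)); fold m3 in H; lra).
  assert (Hxd2' : Rabs x < d2').
  { assert (H := Rmin_r d2 (Rmin d2' 1)). assert (H' := Rmin_l d2' 1). fold m3 in H; lra. }
  assert (Hx1 : Rabs x < 1).
  { assert (H := Rmin_r d2 (Rmin d2' 1)). assert (H' := Rmin_r d2' 1). fold m3 in H; lra. }
  assert (Hxy : Rabs x <= 2 / Rabs c * y).
  { specialize (H2' x Hxd2'). rewrite Hfx, f0 in H2'.
    change (Derive_n f 1 0) with c in H2'.
    assert (Hp : Rabs x ^ S (S n) <= Rabs x).
    { change (Rabs x ^ S (S n)) with (Rabs x * Rabs x ^ S n).
      apply Rle_trans with (Rabs x * 1); [|lra]. apply Rmult_le_compat_l. apply Rabs_pos.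
      rewrite <- (pow1 (S n)). apply pow_incr. split. apply Rabs_pos. lra. }
    assert (Htri : Rabs (x * c) <= Rabs y + Rabs (y - 0 - x * c)).
    { set (t := y - 0 - x * c). replace (x * c) with (y - t) by (unfold t; ring).
      eapply Rle_trans. apply Rabs_triang. rewrite Rabs_Ropp. lra. }
    rewrite Rabs_mult, (Rabs_right y) in Htri by lra.
    assert (Rabs x * Rabs c <= y + Rabs c / 2 * Rabs x).
    { eapply Rle_trans. apply Htri. apply Rplus_le_compat_l. eapply Rle_trans. apply H2'.
      apply Rmult_le_compat_l; lra. }
    apply Rmult_le_reg_l with (Rabs c / 2). lra.
    replace (Rabs c / 2 * (2 / Rabs c * y)) with y by (field; lra). lra. }
  assert (Hx0 : x <> 0).
  { intro E. rewrite E, f0 in Hfx. lra. }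
  assert (Hy0 : y <> 0) by lra.
  destruct (TLabs g n y Hy0 Exg Hlow) as [z [Hz E]].
  assert (Hgz : Rabs D / 2 < Rabs (Derive_n g (S (S n)) z)).
  { specialize (H1 z). rewrite Rminus_0_r in H1. fold D in H1.
    assert (Rabs (Derive_n g (S (S n)) z - D) < Rabs D / 2).
    { apply H1. rewrite (Rabs_right y) in Hz; lra. }
    assert (Rabs D <= Rabs (Derive_n g (S (S n)) z) + Rabs (Derive_n g (S (S n)) z - D)).
    { set (t := Derive_n g (S (S n)) z - D). replace D with (Derive_n g (S (S n)) z - t) at 1 by (unfold t; ring).
      eapply Rle_trans. apply Rabs_triang. rewrite Rabs_Ropp. lra. }
    lra. }
  rewrite (Rabs_right y) in E by lra. fold F in E.
  set (Y := y ^ S (S n)) in *.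
  assert (HY : 0 < Y) by (apply pow_lt; lra).
  assert (Low : Y / F * (Rabs D / 2) < Rabs (g y - g 0 - y * Derive_n g 1 0)).
  { rewrite E. apply Rmult_lt_compat_l; auto. apply Rdiv_lt_0_compat; lra. }
  change (Derive_n g 1 0) with c' in Low. fold x in Low. rewrite g0 in Low.
  assert (Eq : x - 0 - y * c' = - c' * (f x - 0 - x * c)).
  { rewrite Hfx. replace (- c' * (y - 0 - x * c)) with (- c' * y + x * (c' * c)) by ring.
    rewrite Hinv. ring. }
  rewrite Eq, Rabs_mult, Rabs_Ropp in Low.
  assert (Hc' : Rabs c' = / Rabs c).
  { rewrite <- Rabs_inv. f_equal. apply Rmult_eq_reg_r with c; auto. rewrite Hinv. field; auto. }
  rewrite Hc' in Low.
  specialize (H2 x Hxd2). change (Derive_n f 1 0) with c in H2. rewrite f0 in H2.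
  assert (Hxj : Rabs x ^ S (S n) <= K * Y).
  { unfold K, Y. rewrite <- Rpow_mult_distr. apply pow_incr. split. apply Rabs_pos. auto. }
  assert (Up : / Rabs c * Rabs (f x - 0 - x * c) <= / Rabs c * (e0 * (K * Y))).
  { apply Rmult_le_compat_l. left; apply Rinv_0_lt_compat; auto.
    eapply Rle_trans. apply H2. apply Rmult_le_compat_l; lra. }
  assert (Eq2 : / Rabs c * (e0 * (K * Y)) = Y / F * (Rabs D / 2)).
  { unfold e0. field. repeat split; lra. }
  lra.
Qed.

Lemma flat_inv k f g : valid_smoothness k -> Ck k f -> Ck k g ->
  (forall x, g (f x) = x) -> (forall y, f (g y) = y) -> f 0 = 0 -> flat k f -> flat k g.
Proof.
  intros Hk Cf Cg Hgf Hfg f0 Ff.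
  assert (P : forall n, le_k (S (S n)) k -> forall m, (2 <= m <= S (S n))%nat -> Derive_n g m 0 = 0).
  { induction n as [|n IH]; intros Hn m Hm.
    - assert (m = 2%nat) by lia. subst m. apply (core k f g 0); auto.
      intros m Hm'. lia.
    - destruct (Nat.eq_dec m (S (S (S n)))) as [->|Hne].
      + apply (core k f g (S n)); auto. intros m' Hm'. apply IH. apply le_k_S; auto. lia.
      + apply IH. apply le_k_S; auto. lia. }
  intros i Hi2 Hi. destruct i as [|[|n]]; try lia. apply (P n Hi). lia.
Qed.

Lemma inv_incr h g : orientation_preserving h -> (forall y, h (g y) = y) -> orientation_preserving g.
Proof.
  intros Hh Hhg x y Hxy. destruct (Rlt_le_dec (g x) (g y)) as [H|H]; auto.
  exfalso. destruct (Rle_lt_or_eq_dec _ _ H) as [H'|H'].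
  - assert (E := Hh _ _ H'). rewrite !Hhg in E. lra.
  - assert (E := f_equal h H'). rewrite !Hhg in E. lra.
Qed.
Lemma inv_decr h g : orientation_reversing h -> (forall y, h (g y) = y) -> orientation_reversing g.
Proof.
  intros Hh Hhg x y Hxy. destruct (Rlt_le_dec (g y) (g x)) as [H|H]; auto.
  exfalso. destruct (Rle_lt_or_eq_dec _ _ H) as [H'|H'].
  - assert (E := Hh _ _ H'). rewrite !Hhg in E. lra.
  - assert (E := f_equal h H'). rewrite !Hhg in E. lra.
Qed.

Lemma Ck_plus k p c d : Ck k p -> p 0 = 0 -> orientation_preserving p -> 0 < c -> 0 < d ->
  c * d = 1 -> flat k p -> Ck k (fun x => w c (p (w d x))).
Proof.
  intros Cp p0 Hp Hc Hd Hcd Fp.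
  replace (fun x => w c (p (w d x))) with (glue p (fun y => c * p (d * y))).
  2:{ apply functional_extensionality. intros x. symmetry. apply rep_incr; auto. }
  apply glue_Ck; auto. apply scale_Ck; auto.
  intros i Hi. rewrite (scale_Dn k) by auto. rewrite Rmult_0_r.
  destruct i as [|[|m]].
  - simpl. rewrite p0. ring.
  - simpl. rewrite <- Rmult_assoc, Rmult_1_r, Hcd. ring.
  - rewrite Fp by (auto; lia). ring.
Qed.

Lemma Ck_minus k p c : Ck k p -> p 0 = 0 -> orientation_reversing p -> 0 < c ->
  flat k p -> Ck k (fun x => w c (p (w c x))).
Proof.
  intros Cp p0 Hp Hc Fp.
  replace (fun x => w c (p (w c x))) with (glue (fun y => c * p (1 * y)) (fun y => 1 * p (c * y))).
  2:{ apply functional_extensionality. intros x. symmetry. apply rep_decr; auto. }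
  apply glue_Ck; try apply scale_Ck; auto.
  intros i Hi. rewrite !(scale_Dn k) by auto. rewrite !Rmult_0_r.
  destruct i as [|[|m]].
  - simpl. rewrite p0. ring.
  - simpl. ring.
  - rewrite Fp by (auto; lia). ring.
Qed.

Lemma backward_gen k a b h g : 0 < a -> 0 < b -> Dk k h ->
  (forall x, g (h x) = x) -> (forall y, h (g y) = y) ->
  Ck k (fun x => w (/ b) (h (w (/ a) x))) -> Ck k (fun z => w a (g (w b z))) ->
  in_wDw k b a h.
Proof.
  intros Ha Hb [Chd h0] Hgh Hhg C1 C2.
  assert (Wi : forall c t, 0 < c -> w c (w (/ c) t) = t).
  { intros c t Hc. rewrite <- (Rinv_inv c) at 1. apply w_inv. apply Rinv_0_lt_compat; auto. }
  exists (fun x => w (/ b) (h (w (/ a) x))). split.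
  - split.
    + split; auto. exists (fun z => w a (g (w b z))). split; [|split]; auto.
      * intros x. rewrite Wi, Hgh, Wi; auto.
      * intros y. rewrite w_inv, Hhg, w_inv; auto.
    + rewrite (w_l (/ a) 0), h0, w_l; lra.
  - apply functional_extensionality. intros x. rewrite Wi, w_inv; auto.
Qed.

Lemma backward_plus k a b h : valid_smoothness k -> 0 < a -> 0 < b -> a * b = 1 ->
  Ek_plus k h -> in_wDw k b a h.
Proof.
  intros Hk Ha Hb Hab [[Hh Fh] Hp].
  destruct Hh as [[Ch [g [Hgh [Hhg Cg]]]] h0].
  assert (g0 : g 0 = 0) by (rewrite <- h0 at 1; apply Hgh).
  apply (backward_gen k a b h g); auto.
  - split; auto. split; auto. exists g; auto.
  - apply Ck_plus; auto; try (apply Rinv_0_lt_compat; auto).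
    rewrite <- Rinv_mult, Rmult_comm, Hab. apply Rinv_1.
  - apply Ck_plus; auto. apply (inv_incr h g); auto.
    apply (flat_inv k h g); auto.
Qed.

Lemma backward_minus k a h : valid_smoothness k -> 0 < a ->
  Ek_minus k h -> in_wDw k a a h.
Proof.
  intros Hk Ha [[Hh Fh] Hp].
  destruct Hh as [[Ch [g [Hgh [Hhg Cg]]]] h0].
  assert (g0 : g 0 = 0) by (rewrite <- h0 at 1; apply Hgh).
  apply (backward_gen k a a h g); auto.
  - split; auto. split; auto. exists g; auto.
  - apply Ck_minus; auto; try (apply Rinv_0_lt_compat; auto).
  - apply Ck_minus; auto. apply (inv_decr h g); auto.
    apply (flat_inv k h g); auto.
Qed.

Theorem corollary5p17 (k : smoothness) (a b : R) :
  valid_smoothness k -> 0 < a -> 0 < b -> a <> 1 -> b <> 1 ->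
  ((a <> b -> a <> / b -> forall h : R -> R, ~ (Dk k h /\ in_wDw k b a h)) /\
   (a * b = 1 -> forall h : R -> R, (Dk k h /\ in_wDw k b a h) <-> Ek_plus k h) /\
   (a = b -> forall h : R -> R, (Dk k h /\ in_wDw k b a h) <-> Ek_minus k h)).
Proof.
  intros Hk Ha Hb Ha1 Hb1. split; [|split].
  - intros Hab Hab' h [Hh [f [Hf Eh]]].
    destruct (forward k a b h f Hk Ha Hb Ha1 Hh Hf Eh) as [[E _]|[E _]].
    + apply Hab'. apply Rmult_eq_reg_r with b. rewrite E, Rinv_l; lra. lra.
    + auto.
  - intros Hab h. split.
    + intros [Hh [f [Hf Eh]]].
      destruct (forward k a b h f Hk Ha Hb Ha1 Hh Hf Eh) as [[E [Hp Fl]]|[E _]].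
      * split; auto. split; auto.
      * exfalso. subst b. assert ((a - 1) * (a + 1) = 0) by lra.
        destruct (Rmult_integral _ _ H); lra.
    + intros He. split. apply He. apply backward_plus; auto.
  - intros Hab h. split.
    + intros [Hh [f [Hf Eh]]].
      destruct (forward k a b h f Hk Ha Hb Ha1 Hh Hf Eh) as [[E _]|[E [Hp Fl]]].
      * exfalso. subst b. assert ((a - 1) * (a + 1) = 0) by lra.
        destruct (Rmult_integral _ _ H); lra.
      * split; auto. split; auto.
    + intros He. split. apply He. subst b. apply backward_minus; auto.
Qed.
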